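(* Let $d\ge2$, $f:\mathbb Z^d\to\mathbb R$, and let $\varphi:G\to\mathbb R$ be a bounded $f$-flow on the Cayley graph $G$ of $\mathbb Z^d$. Let $$C=\{n_1,\dots,n_1+k_1\}\times\dots\times\{n_{d-1},\dots,n_{d-1}+k_{d-1}\}\times\{n_d,n_d+1\}$$ for some integers $n_1,\dots,n_d,k_1,\dots,k_{d-1}$ with $k_1,\dots,k_{d-1}\ge0$. Then for every $1\le\ell<d$ there is an $f$-flow $\psi$ such that: (i) $\mathrm{supp}(\varphi-\psi)\subseteq\mathrm{edges}(C)$; (ii) for every $x=(x_1,\dots,x_{d-1},n_d)\in C$ with $n_\ell\le x_\ell<n_\ell+k_\ell$ we have $\psi(x,x+e_d)\in\mathbb Z$; (iii) $|\varphi-\psi|<2$ on every edge.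
   Context: $G=\{(x,x')\in\mathbb Z^d\times\mathbb Z^d: x'-x\in\{\pm e_1,\dots,\pm e_d\}\}$ is the Cayley graph of $\mathbb Z^d$; an edge $(x,x')$ is positively oriented if $x'-x=e_j$ for some $j$. For $A\subseteq\mathbb Z^d$, $\mathrm{edges}(A)=\{(x,x+e_j):1\le j\le d,\ \{x,x+e_j\}\subseteq A\}$. An $f$-flow is $\varphi:G\to\mathbb R$ with $\varphi(x,y)=-\varphi(y,x)$ and $f(x)=\sum_{(x,y)\in G}\varphi(x,y)$ for all $x$. For a flow difference $\eta=\varphi-\psi$ (antisymmetric), ''$\mathrm{supp}(\eta)\subseteq \mathcal E$'' for a set $\mathcal E$ of positively oriented edges means $\eta(x,y)=0$ unless $(x,y)\in\mathcal E$ or $(y,x)\in\mathcal E$. *)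

(* Defs.v *)
From Stdlib Require Import Reals ZArith List.
From mathcomp Require Import ssreflect ssrfun ssrbool eqtype ssrnat seq choice fintype.

Set Implicit Arguments.
Unset Strict Implicit.
Unset Printing Implicit Defensive.

(* A point of Z^d: coordinates indexed by 'I_d (coordinate j+1 of the paper
   is index j here). *)
Definition pt (d : nat) := 'I_d -> Z.

Definition shiftp (d : nat) (x : pt d) (j : 'I_d) (s : Z) : pt d :=
  fun i => if i == j then (x i + s)%Z else x i.

Definition Gedge (d : nat) (x y : pt d) : Prop :=
  exists j : 'I_d, y = shiftp x j 1%Z \/ y = shiftp x j (-1)%Z.

Definition edges_of (d : nat) (A : pt d -> Prop) (x y : pt d) : Prop :=
  exists j : 'I_d, y = shiftp x j 1%Z /\ A x /\ A y.

Definition out_sum (d : nat) (phi : pt d -> pt d -> R) (x : pt d) : R :=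
  fold_right Rplus 0%R
    (map (fun j : 'I_d => (phi x (shiftp x j 1%Z) + phi x (shiftp x j (-1)%Z))%R)
         (enum 'I_d)).

Definition is_flow (d : nat) (f : pt d -> R) (phi : pt d -> pt d -> R) : Prop :=
  (forall x y, Gedge x y -> phi x y = (- phi y x)%R) /\
  (forall x, f x = out_sum phi x).

Definition bounded_on_G (d : nat) (phi : pt d -> pt d -> R) : Prop :=
  exists M : R, forall x y, Gedge x y -> (Rabs (phi x y) <= M)%R.

Definition supp_in (d : nat) (eta : pt d -> pt d -> R)
  (E : pt d -> pt d -> Prop) : Prop :=
  forall x y, Gedge x y -> eta x y <> 0%R -> E x y \/ E y x.

Definition box (d : nat) (n k : 'I_d -> Z) (x : pt d) : Prop :=
  forall j : 'I_d,
    (n j <= x j <= n j + (if (val j < d.-1)%nat then k j else 1%Z))%Z.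

(* Main.v *)
Require Import Defs.
From Stdlib Require Import Reals ZArith List.
From mathcomp Require Import ssreflect ssrfun ssrbool eqtype ssrnat seq choice fintype.
From Stdlib Require Import Lra Lia ClassicalEpsilon FunctionalExtensionality.

Local Open Scope R_scope.

Definition ind (P : Prop) (r : R) : R :=
  if excluded_middle_informative P then r else 0.

Lemma ind_T (P : Prop) (r : R) : P -> ind P r = r.
Proof. by rewrite /ind; case: (excluded_middle_informative P). Qed.

Lemma ind_F (P : Prop) (r : R) : ~ P -> ind P r = 0.
Proof. by rewrite /ind; case: (excluded_middle_informative P). Qed.

Lemma ind_iff (P Q : Prop) (r : R) : (P <-> Q) -> ind P r = ind Q r.
Proof.
move=> [h1 h2]; rewrite /ind.
case: (excluded_middle_informative P) => hP;
case: (excluded_middle_informative Q) => hQ //.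
- by exfalso; apply: hQ; apply: h1.
- by exfalso; apply: hP; apply: h2.
Qed.

Definition hh (r : R) : R := IZR (up r) - r.
Lemma hh_bounds r : 0 < hh r <= 1.
Proof. rewrite /hh; have [h1 h2] := archimed r; lra. Qed.

Fixpoint cseq (v : nat -> R) (t : nat) : R :=
  match t with O => hh (v O) | S t' => hh (v (S t') - cseq v t') end.

Lemma cseq_bounds v t : 0 < cseq v t <= 1.
Proof. case: t => [|t] /=; apply hh_bounds. Qed.

Lemma shiftpK {d} (x : pt d) j : shiftp (shiftp x j (-1)%Z) j 1%Z = x.
Proof. apply: functional_extensionality => i; rewrite /shiftp; case: (i == j); lia. Qed.

Lemma shiftpC {d} (x : pt d) j j' s s' :
  shiftp (shiftp x j s) j' s' = shiftp (shiftp x j' s') j s.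
Proof.
apply: functional_extensionality => i; rewrite /shiftp;
case: (i == j); case: (i == j'); lia.
Qed.

Lemma sh_eq {d} (x : pt d) j j' s s' : s <> 0%Z ->
  shiftp x j s = shiftp x j' s' -> j = j' /\ s = s'.
Proof.
move=> hs /(f_equal (fun f => f j)); rewrite /shiftp eqxx.
case: (eqVneq j j') => [<-|hne] h; first by split=> //; lia.
exfalso; lia.
Qed.

Lemma sh_eq2 {d} (x : pt d) j j' s :
  x = shiftp (shiftp x j s) j' 1%Z -> j' = j /\ s = (-1)%Z.
Proof.
move/(f_equal (fun f => f j')); rewrite /shiftp eqxx.
case: (eqVneq j' j) => [<-|hne] h; first by split=> //; lia.
exfalso; lia.
Qed.

Lemma iffA {d} (x : pt d) j j' s : s <> 0%Z ->
  (shiftp x j s = shiftp x j' 1%Z <-> j = j' /\ s = 1%Z).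
Proof. move=> hs; split; first exact: sh_eq. by case=> -> ->. Qed.

Lemma iffB {d} (x : pt d) j j' s :
  (x = shiftp (shiftp x j s) j' 1%Z <-> j = j' /\ s = (-1)%Z).
Proof.
split; first by move/sh_eq2 => [-> ->].
by case=> -> ->; rewrite shiftpK.
Qed.

Lemma sum_two_seq {d} (F : 'I_d -> R) (l dl : 'I_d) : l <> dl ->
  (forall j, j <> l -> j <> dl -> F j = 0) ->
  forall s : seq 'I_d, uniq s ->
  fold_right Rplus 0 (map F s) =
    (if l \in s then F l else 0) + (if dl \in s then F dl else 0).
Proof.
move=> hne hF; elim=> [|j s IH] /=; first by move=> _; rewrite ?in_nil; lra.
case/andP=> hj hu; rewrite IH // !in_cons.
have hne' : (l == dl) = false by apply/eqP.
have hne'' : (dl == l) = false by apply/eqP => e; apply: hne.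
case: (eqVneq l j) => [e|hlj].
- rewrite -e in hj *; rewrite (negbTE hj) hne'' /=; lra.
- case: (eqVneq dl j) => [e|hdj].
  + rewrite -e in hj *; rewrite (negbTE hj) /=; lra.
  + have h1 : j <> l by move=> e; rewrite e eqxx in hlj.
    have h2 : j <> dl by move=> e; rewrite e eqxx in hdj.
    rewrite /= hF //; lra.
Qed.

Lemma sum_two {d} (F : 'I_d -> R) (l dl : 'I_d) : l <> dl ->
  (forall j, j <> l -> j <> dl -> F j = 0) ->
  fold_right Rplus 0 (map F (enum 'I_d)) = F l + F dl.
Proof.
move=> hne hF; rewrite (sum_two_seq F l dl hne hF _ (enum_uniq _)) !mem_enum /=; lra.
Qed.

Lemma out_sum_add {d} (p q : pt d -> pt d -> R) x :
  out_sum (fun x y => p x y + q x y) x = out_sum p x + out_sum q x.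
Proof.
rewrite /out_sum; elim: (enum 'I_d) => [|j s IH] /=; [lra | rewrite IH; lra].
Qed.

Definition AA {d} (a : pt d -> R) (l : 'I_d) (x : pt d) : R :=
  a x - a (shiftp x l (-1)%Z).
Definition BB {d} (a : pt d -> R) (dl : 'I_d) (x : pt d) : R :=
  a (shiftp x dl (-1)%Z) - a x.

Definition eta {d} (a : pt d -> R) (l dl : 'I_d) (x y : pt d) : R :=
  ind (y = shiftp x dl 1%Z) (AA a l x) - ind (x = shiftp y dl 1%Z) (AA a l y)
  + ind (y = shiftp x l 1%Z) (BB a dl x) - ind (x = shiftp y l 1%Z) (BB a dl y).

Lemma eta_anti {d} (a : pt d -> R) l dl x y : eta a l dl x y = - eta a l dl y x.
Proof. rewrite /eta; lra. Qed.

Lemma eta_sh {d} (a : pt d -> R) (l dl : 'I_d) (x : pt d) j s : s <> 0%Z ->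
  eta a l dl x (shiftp x j s) =
    ind (j = dl /\ s = 1%Z) (AA a l x)
  - ind (j = dl /\ s = (-1)%Z) (AA a l (shiftp x j s))
  + ind (j = l /\ s = 1%Z) (BB a dl x)
  - ind (j = l /\ s = (-1)%Z) (BB a dl (shiftp x j s)).
Proof.
move=> hs; rewrite /eta (ind_iff _ _ _ (iffA x j dl s hs)) (ind_iff _ _ _ (iffB x j dl s))
  (ind_iff _ _ _ (iffA x j l s hs)) (ind_iff _ _ _ (iffB x j l s)).
done.
Qed.

Ltac dind := repeat match goal with
 | |- context [ind ?P ?r] =>
    first [ rewrite (@ind_T P r); [| solve [split; reflexivity]]
          | rewrite (@ind_F P r); [| let h := fresh in let h2 := fresh in
                 intros [h h2]; first [congruence | lia]] ]
 end.

Lemma eta_div {d} (a : pt d -> R) (l dl : 'I_d) : l <> dl ->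
  forall x, out_sum (eta a l dl) x = 0.
Proof.
move=> hne x; rewrite /out_sum (sum_two _ l dl hne).
- rewrite !eta_sh; try lia.
  dind. rewrite /AA /BB (shiftpC x dl l (-1)%Z (-1)%Z); lra.
- move=> j hjl hjd; rewrite !eta_sh; try lia.
  dind; lra.
Qed.

Lemma eta_bnd {d} (a : pt d -> R) (l dl : 'I_d) : l <> dl ->
  (forall p, 0 <= a p <= 1) ->
  forall x j s, (s = 1 \/ s = -1)%Z -> Rabs (eta a l dl x (shiftp x j s)) <= 1.
Proof.
move=> hne ha x j s hs; rewrite eta_sh; last by lia.
have := ha x; have := ha (shiftp x l (-1)%Z); have := ha (shiftp x dl (-1)%Z).
have := ha (shiftp (shiftp x dl (-1)%Z) l (-1)%Z).
have := ha (shiftp (shiftp x l (-1)%Z) dl (-1)%Z).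
rewrite /AA /BB.
case: hs => ->; (case: (eqVneq j dl) => [->|/eqP hjd];
  [| case: (eqVneq j l) => [->|/eqP hjl]]); dind; intros; apply: Rabs_le; lra.
Qed.

Definition setc {d} (x : pt d) (j : 'I_d) (z : Z) : pt d :=
  fun i => if i == j then z else x i.
Definition Lp {d} (n : 'I_d -> Z) (l : 'I_d) (p : pt d) (s : nat) : pt d :=
  setc p l (n l + Z.of_nat s)%Z.
Definition vv {d} (n : 'I_d -> Z) (l dl : 'I_d) (phi : pt d -> pt d -> R)
  (p : pt d) (s : nat) : R :=
  phi (Lp n l p s) (shiftp (Lp n l p s) dl 1%Z).
Definition good {d} (n k : 'I_d -> Z) (l dl : 'I_d) (p : pt d) : Prop :=
  p dl = n dl /\
  (forall j, j <> l -> j <> dl ->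
     (n j <= p j <= n j + (if (val j < d.-1)%N then k j else 1%Z))%Z) /\
  (n l <= p l < n l + k l)%Z.
Definition aa {d} (n k : 'I_d -> Z) (l dl : 'I_d) (phi : pt d -> pt d -> R)
  (p : pt d) : R :=
  ind (good n k l dl p) (cseq (vv n l dl phi p) (Z.to_nat (p l - n l))).

Lemma aa_bnd {d} n k (l dl : 'I_d) phi p : 0 <= aa n k l dl phi p <= 1.
Proof.
rewrite /aa /ind; case: (excluded_middle_informative (good n k l dl p)) => hg /=; last lra.
have := cseq_bounds (vv n l dl phi p) (Z.to_nat (p l - n l)); lra.
Qed.

Lemma aa_good {d} n k (l dl : 'I_d) phi p : aa n k l dl phi p <> 0 -> good n k l dl p.
Proof.
rewrite /aa /ind; case: (excluded_middle_informative (good n k l dl p)) => // hg h.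

Qed.

Lemma good_box {d} (n k : 'I_d -> Z) (l dl : 'I_d) (hdl : val dl = d.-1)
  (hl : (val l < d.-1)%N) p q (s t : Z) :
  good n k l dl p -> (0 <= s <= 1)%Z -> (0 <= t <= 1)%Z ->
  (forall j, q j = if j == dl then (p j + s)%Z else if j == l then (p j + t)%Z else p j) ->
  box n k q.
Proof.
move=> [h1 [h2 h3]] hs ht hq j; rewrite hq.
case: (eqVneq j dl) => [e|hjd].
- rewrite e hdl ltnn /=; lia.
- case: (eqVneq j l) => [e|hjl].
  + rewrite e hl /=; lia.
  + apply: h2; [by move=> e; rewrite e eqxx in hjl | by move=> e; rewrite e eqxx in hjd].
Qed.

Lemma Lp_self {d} n l (x : pt d) s : x l = (n l + Z.of_nat s)%Z -> Lp n l x s = x.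
Proof.
move=> h; apply: functional_extensionality => i; rewrite /Lp /setc.
case: (eqVneq i l) => [e|_] //; by rewrite e h.
Qed.

Lemma Lp_shift {d} n l (x : pt d) z s : Lp n l (shiftp x l z) s = Lp n l x s.
Proof.
apply: functional_extensionality => i; rewrite /Lp /setc /shiftp; by case: (i == l).
Qed.

Lemma aa_int {d} (n k : 'I_d -> Z) (l dl : 'I_d) (hne : l <> dl)
  (hdl : val dl = d.-1) (hl : (val l < d.-1)%N) phi x :
  box n k x -> x dl = n dl -> (n l <= x l < n l + k l)%Z ->
  exists z, phi x (shiftp x dl 1%Z) +
     (aa n k l dl phi x - aa n k l dl phi (shiftp x l (-1)%Z)) = IZR z.
Proof.
move=> hb hxd hxl.
have hg : good n k l dl x by split=> //; split=> // j _ _; exact: hb.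
rewrite /aa (ind_T _ _ hg).
set t := Z.to_nat (x l - n l).
have ht : x l = (n l + Z.of_nat t)%Z by rewrite /t Z2Nat.id; lia.
case ht' : t => [|t'].
- rewrite ht' in ht.
  rewrite ind_F; last first.
    by move=> [_ [_ h]]; move: h; rewrite /shiftp eqxx; lia.
  rewrite /= /hh /vv (Lp_self n l x 0) //.
  exists (up (phi x (shiftp x dl 1%Z))); lra.
- rewrite ht' in ht.
  have hg2 : good n k l dl (shiftp x l (-1)%Z).
    have hdl' : (dl == l) = false by apply/eqP => e; apply: hne.
    split; first by rewrite /shiftp hdl'.
    split.
      move=> j hjl hjd; rewrite /shiftp.
      have -> : (j == l) = false by apply/eqP.
      exact: hb.
    rewrite /shiftp eqxx; lia.
  rewrite (ind_T _ _ hg2).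
  have -> : Z.to_nat (shiftp x l (-1)%Z l - n l) = t'.
    rewrite /shiftp eqxx ht.
    have -> : (n l + Z.of_nat t'.+1 + -1 - n l)%Z = Z.of_nat t' by lia.
    by rewrite Nat2Z.id.
  have -> : vv n l dl phi (shiftp x l (-1)%Z) = vv n l dl phi x.
    apply: functional_extensionality => s; by rewrite /vv Lp_shift.
  rewrite /= /hh.
  have -> : vv n l dl phi x t'.+1 = phi x (shiftp x dl 1%Z) by rewrite /vv Lp_self.
  exists (up (phi x (shiftp x dl 1%Z) - cseq (vv n l dl phi x) t')); lra.
Qed.

Ltac ptw l dl h := let i := fresh "i" in intro i; rewrite /shiftp;
  case: (eqVneq i dl) => [->|?]; [ rewrite ?eqxx ?h /=; lia |];
  case: (eqVneq i l) => [->|?]; rewrite ?eqxx /=; lia.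

Lemma supp_lemma {d} (n k : 'I_d -> Z) (l dl : 'I_d) (hne : l <> dl)
  (hdl : val dl = d.-1) (hl : (val l < d.-1)%N) phi x y :
  Gedge x y -> eta (aa n k l dl phi) l dl x y <> 0 ->
  edges_of (box n k) x y \/ edges_of (box n k) y x.
Proof.
have hdl' : (dl == l) = false by apply/eqP => e; apply: hne.
have hld' : (l == dl) = false by apply/eqP.
set a := aa n k l dl phi.
have gb := good_box n k l dl hdl hl.
case=> j [->|->]; rewrite eta_sh; try lia; rewrite /AA /BB;
  (case: (eqVneq j dl) => [->|/eqP hjd];
  [| case: (eqVneq j l) => [->|/eqP hjl]]); dind; move=> h.
- left; exists dl; split=> //.
  case: (Req_dec (a x) 0) => hax.
  + have hg := aa_good _ _ _ _ _ _ (_ : a (shiftp x l (-1)%Z) <> 0).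
    have {}hg := hg ltac:(lra).
    split; [apply: (gb _ _ 0%Z 1%Z hg) | apply: (gb _ _ 1%Z 1%Z hg)]; try lia; ptw l dl hdl'.
  + have hg := aa_good _ _ _ _ _ _ hax.
    split; [apply: (gb _ _ 0%Z 0%Z hg) | apply: (gb _ _ 1%Z 0%Z hg)]; try lia; ptw l dl hdl'.
- left; exists l; split=> //.
  case: (Req_dec (a x) 0) => hax.
  + have hg := aa_good _ _ _ _ _ _ (_ : a (shiftp x dl (-1)%Z) <> 0).
    have {}hg := hg ltac:(lra).
    split; [apply: (gb _ _ 1%Z 0%Z hg) | apply: (gb _ _ 1%Z 1%Z hg)]; try lia; ptw l dl hdl'.
  + have hg := aa_good _ _ _ _ _ _ hax.
    split; [apply: (gb _ _ 0%Z 0%Z hg) | apply: (gb _ _ 0%Z 1%Z hg)]; try lia; ptw l dl hdl'.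
- lra.
- right; exists dl; split; first by rewrite shiftpK.
  set yy := shiftp x dl (-1)%Z in h *.
  case: (Req_dec (a yy) 0) => hay.
  + have hg := aa_good _ _ _ _ _ _ (_ : a (shiftp yy l (-1)%Z) <> 0).
    have {}hg := hg ltac:(lra).
    split; [apply: (gb _ _ 0%Z 1%Z hg) | apply: (gb _ _ 1%Z 1%Z hg)]; try lia;
      rewrite /yy; ptw l dl hdl'.
  + have hg := aa_good _ _ _ _ _ _ hay.
    split; [apply: (gb _ _ 0%Z 0%Z hg) | apply: (gb _ _ 1%Z 0%Z hg)]; try lia;
      rewrite /yy; ptw l dl hdl'.
- right; exists l; split; first by rewrite shiftpK.
  set yy := shiftp x l (-1)%Z in h *.
  case: (Req_dec (a yy) 0) => hay.
  + have hg := aa_good _ _ _ _ _ _ (_ : a (shiftp yy dl (-1)%Z) <> 0).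
    have {}hg := hg ltac:(lra).
    split; [apply: (gb _ _ 1%Z 0%Z hg) | apply: (gb _ _ 1%Z 1%Z hg)]; try lia;
      rewrite /yy; ptw l dl hdl'.
  + have hg := aa_good _ _ _ _ _ _ hay.
    split; [apply: (gb _ _ 0%Z 0%Z hg) | apply: (gb _ _ 0%Z 1%Z hg)]; try lia;
      rewrite /yy; ptw l dl hdl'.
- lra.
Qed.

Theorem mainTheorem5 (d : nat) (hd : (2 <= d)%N)
  (f : pt d -> R) (phi : pt d -> pt d -> R)
  (hphi : is_flow f phi) (hbd : bounded_on_G phi)
  (n k : 'I_d -> Z) (hk : forall j : 'I_d, (val j < d.-1)%N -> (0 <= k j)%Z)
  (dl : 'I_d) (hdl : val dl = d.-1)
  (l : 'I_d) (hl : (val l < d.-1)%N) :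
  exists psi : pt d -> pt d -> R,
    is_flow f psi /\
    supp_in (fun x y => (phi x y - psi x y)%R) (edges_of (box n k)) /\
    (forall x : pt d, box n k x -> x dl = n dl ->
       (n l <= x l < n l + k l)%Z ->
       exists z : Z, psi x (shiftp x dl 1%Z) = IZR z) /\
    (forall x y, Gedge x y -> (Rabs (phi x y - psi x y) < 2)%R).
Proof.
have hne : l <> dl by move=> e; move: hl; rewrite e hdl ltnn.
exists (fun x y => phi x y + eta (aa n k l dl phi) l dl x y).
case: hphi => hanti hdiv.
split; [split|split; [|split]].
- move=> x y hG; rewrite (hanti x y hG) (eta_anti _ l dl x y); lra.
- move=> x; rewrite (out_sum_add phi (eta (aa n k l dl phi) l dl)) -hdiv eta_div //; lra.
- move=> x y hG hnz; apply: (supp_lemma n k l dl hne hdl hl phi x y hG).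
  move=> e; apply: hnz => /=; rewrite e; lra.
- move=> x hb hxd hxl.
  have [z hz] := aa_int n k l dl hne hdl hl phi x hb hxd hxl.
  exists z; rewrite -hz.
  have -> : eta (aa n k l dl phi) l dl x (shiftp x dl 1%Z) =
    aa n k l dl phi x - aa n k l dl phi (shiftp x l (-1)%Z).
    rewrite eta_sh; last lia.
    dind; rewrite /AA; lra.
  done.
- move=> x y [j [->|->]].
  + have := eta_bnd (aa n k l dl phi) l dl hne (aa_bnd n k l dl phi) x j 1%Z ltac:(lia).
    move=> hb; rewrite (_ : forall u v, u - (u + v) = - v); last by move=> u v; ring.
    rewrite Rabs_Ropp; lra.
  + have := eta_bnd (aa n k l dl phi) l dl hne (aa_bnd n k l dl phi) x j (-1)%Z ltac:(lia).
    move=> hb; rewrite (_ : forall u v, u - (u + v) = - v); last by move=> u v; ring.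
    rewrite Rabs_Ropp; lra.
Qed.
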